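(* Let $G_1,G_2,\dots$ be i.i.d. $N(0,1)$ random variables and $\{\alpha_{jk}:j,k\ge1\}$ deterministic real numbers such that $\sum_{j,k=1}^{2n}\alpha_{jk}G_jG_k\to Z$ in probability as $n\to\infty$ for some finite random variable $Z$. If $\alpha_{11}\ne0$, then $Z$ has a continuous distribution, i.e. $P(Z=z)=0$ for every $z\in\mathbb R$. *)

(* Defs.v *)
From HB Require Import structures.
From mathcomp Require Import all_boot all_order all_algebra.
From mathcomp Require Import all_classical all_reals all_analysis.
Set Implicit Arguments. Unset Strict Implicit. Unset Printing Implicit Defensive.
Import Order.TTheory GRing.Theory Num.Theory.
Import numFieldNormedType.Exports.
Local Open Scope classical_set_scope.
Local Open Scope ring_scope.

Definition mutually_independent_seq {d} {T : measurableType d} {R : realType}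
  (P : probability T R) (G : nat -> T -> R) : Prop :=
  forall (s : seq nat) (B : nat -> set R),
    uniq s -> (forall i, measurable (B i)) ->
    P (\big[setI/setT]_(i <- s) (G i @^-1` B i)) =
    (\prod_(i <- s) P (G i @^-1` B i))%E.

Definition standard_normal {d} {T : measurableType d} {R : realType}
  (P : probability T R) (X : T -> R) : Prop :=
  forall A : set R, measurable A -> P (X @^-1` A) = normal_prob 0 1 A.

Definition cvg_in_probability {d} {T : measurableType d} {R : realType}
  (P : probability T R) (X : nat -> T -> R) (Z : T -> R) : Prop :=
  forall eps : R, 0 < eps ->
    (fun n => P [set w | eps <= `|X n w - Z w|]) @ \oo --> 0%E.

(* Partial quadratic form sum_{j,k=1}^{2n} alpha_{jk} G_j G_k,
   with 0-based indices (Rocq index j stands for the paper's j+1). *)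
Definition quad_partial {T : Type} {R : realType}
  (alpha : nat -> nat -> R) (G : nat -> T -> R) (n : nat) : T -> R :=
  fun w => \sum_(j < 2 * n) \sum_(k < 2 * n) alpha j k * G j w * G k w.

(* Main.v *)
Require Import Defs.
From HB Require Import structures.
From mathcomp Require Import all_boot all_order all_algebra.
From mathcomp Require Import all_classical all_reals all_analysis.
From mathcomp Require Import measurable_realfun.
Import Order.TTheory GRing.Theory Num.Theory.
Import numFieldNormedType.Exports.
Local Open Scope classical_set_scope.
Local Open Scope ring_scope.
From mathcomp Require Import ring lra.
Section R1.
Variable R : realType.

Lemma sqrt_sub_le (x y : R) : 0 <= y -> Num.sqrt (x + y) - Num.sqrt x <= Num.sqrt y.
Proof.
move=> y0; have [x0|x0] := lerP x 0.
  rewrite (ler0_sqrtr x0) subr0; apply: ler_wsqrtr; lra.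
rewrite lerBlDl.
have h1 : 0 <= Num.sqrt x by apply: sqrtr_ge0.
have h2 : 0 <= Num.sqrt y by apply: sqrtr_ge0.
rewrite -[leRHS]ger0_norm ?addr_ge0 // -sqrtr_sqr ler_sqrt ?sqr_ge0 //.
rewrite sqrrD !sqr_sqrtr ?(ltW x0) //.
have : 0 <= Num.sqrt x * Num.sqrt y *+ 2 by rewrite mulrn_wge0 // mulr_ge0.
lra.
Qed.

Lemma quad_bound (a b c e t : R) : a != 0 -> `|a * t ^+ 2 + b * t + c| < e ->
  Num.sqrt (- (c / a - (b / (2 * a)) ^+ 2) - e / `|a|) <= `|t - - b / (2 * a)|
  <= Num.sqrt (- (c / a - (b / (2 * a)) ^+ 2) + e / `|a|).
Proof.
move=> a0 h.
have ha : 0 < `|a| by rewrite normr_gt0.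
have E : a * t ^+ 2 + b * t + c = a * ((t - - b / (2 * a)) ^+ 2 + (c / a - (b / (2 * a)) ^+ 2)).
  by field.
rewrite E normrM in h.
have h' : `|(t - - b / (2 * a)) ^+ 2 + (c / a - (b / (2 * a)) ^+ 2)| < e / `|a|.
  by rewrite ltr_pdivlMr // mulrC.
move: h'; rewrite ltr_norml => /andP [h1 h2].
rewrite -(sqrtr_sqr (t - - b / (2 * a))); apply/andP; split; apply: ler_wsqrtr; lra.
Qed.
Local Open Scope ereal_scope.
Lemma normal_itv_le (u v : R) : (u <= v)%R ->
  normal_prob 0 1 `[u, v]%classic <= (normal_peak (1:R) * (v - u))%:E.
Proof.
move=> uv; rewrite /normal_prob.
apply: (@le_trans _ _ (\int[lebesgue_measure]_(x in `[u, v]%classic) (normal_peak (1:R))%:E)).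
  apply: ge0_le_integral => //=.
  - by move=> x _; rewrite lee_fin normal_pdf_ge0.
  - apply/measurable_EFinP; apply: measurable_funTS; exact: measurable_normal_pdf.
  - by move=> x _; rewrite lee_fin normal_pdf_ub ?oner_neq0.
rewrite integral_cst //= lebesgue_measure_itv /= lte_fin.
have [uv'|] := ltP u v.
  by rewrite -EFinD -EFinM.
move=> vu; have -> : v = u by apply/eqP; rewrite eq_le uv vu.
by rewrite subrr mulr0 mule0.
Qed.
Local Close Scope ereal_scope.

Definition Qs (a b c e : R) : set R :=
  let r := - b / (2 * a) in
  let q := c / a - (b / (2 * a)) ^+ 2 in
  let s1 := Num.sqrt (- q - e / `|a|) in
  let s2 := Num.sqrt (- q + e / `|a|) in
  `[r - s2, r - s1]%classic `|` `[r + s1, r + s2]%classic.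

Lemma Qs_mem (a b c e t : R) : a != 0 -> `|a * t ^+ 2 + b * t + c| < e -> Qs a b c e t.
Proof.
move=> a0 h; have /andP[h1 h2] := quad_bound _ _ _ _ _ a0 h.
rewrite /Qs /=; move: h1 h2; set r := - b / (2 * a) => h1 h2.
have [tr|tr] := lerP 0 (t - r).
  right; rewrite /= in_itv /=; rewrite (ger0_norm tr) in h1 h2; apply/andP; split; lra.
left; rewrite /= in_itv /=; rewrite (ltr0_norm tr) in h1 h2; apply/andP; split; lra.
Qed.

Lemma normal_Qs (a b c e : R) : a != 0 -> 0 < e ->
  (normal_prob 0 1 (Qs a b c e) <= (2 * normal_peak (1:R) * Num.sqrt (2 * e / `|a|))%:E)%E.
Proof.
move=> a0 e0; rewrite /Qs /=.
set q := c / a - (b / (2 * a)) ^+ 2; set r := - b / (2 * a).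
have f0 : 0 <= e / `|a| by rewrite divr_ge0 // ltW.
have s12 : Num.sqrt (- q - e / `|a|) <= Num.sqrt (- q + e / `|a|) by apply: ler_wsqrtr; lra.
have hs : Num.sqrt (- q + e / `|a|) - Num.sqrt (- q - e / `|a|) <= Num.sqrt (2 * e / `|a|).
  have := sqrt_sub_le (- q - e / `|a|) (2 * e / `|a|).
  have -> : - q - e / `|a| + 2 * e / `|a| = - q + e / `|a|.
    rewrite -mulrA; lra.
  by apply; rewrite -mulrA mulr_ge0 // ler0n.
apply: (le_trans (measureU2 _ _ _)) => //.
have pk : 0 <= normal_peak (1:R) by apply: normal_peak_ge0.
apply: (@le_trans _ _ ((normal_peak (1:R) * Num.sqrt (2 * e / `|a|))%:E +
                       (normal_peak (1:R) * Num.sqrt (2 * e / `|a|))%:E)%E); last first.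
  by rewrite -EFinD lee_fin; lra.
apply: leeD.
  apply: (le_trans (normal_itv_le _ _ _)); first lra.
  rewrite lee_fin ler_wpM2l //; lra.
apply: (le_trans (normal_itv_le _ _ _)); first lra.
rewrite lee_fin ler_wpM2l //; lra.
Qed.
Definition qf (alpha : nat -> nat -> R) (m : nat) (v : nat -> R) : R :=
  \sum_(j < m) \sum_(k < m) alpha j k * v j * v k.
Definition Bf (alpha : nat -> nat -> R) (m : nat) (v : nat -> R) : R :=
  \sum_(k < m) (alpha 0%N k.+1 + alpha k.+1 0%N) * v k.+1.
Definition Cf (alpha : nat -> nat -> R) (m : nat) (v : nat -> R) : R :=
  \sum_(j < m) \sum_(k < m) alpha j.+1 k.+1 * v j.+1 * v k.+1.

Lemma qf_split alpha m v : qf alpha m.+1 v =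
  alpha 0%N 0%N * v 0%N ^+ 2 + Bf alpha m v * v 0%N + Cf alpha m v.
Proof.
rewrite /qf /Bf /Cf big_ord_recl /= big_ord_recl /=.
under [in X in _ + X]eq_bigr do rewrite big_ord_recl /=.
rewrite big_split /= mulr_suml -!addrA; congr (_ + _); first by rewrite expr2 mulrA.
rewrite addrA -big_split /=; congr (_ + _); apply: eq_bigr => i _.
rewrite /bump /=; ring.
Qed.

Lemma qf_diff alpha m (u v : nat -> R) (M h : R) : 0 <= M ->
  (forall j, (j < m)%N -> `|u j| <= M /\ `|v j| <= M /\ `|u j - v j| <= h) ->
  `|qf alpha m u - qf alpha m v| <= 2 * M * h * \sum_(j < m) \sum_(k < m) `|alpha j k|.
Proof.
move=> M0 H; rewrite /qf -sumrB mulr_sumr.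
apply: (le_trans (ler_norm_sum _ _ _)); apply: ler_sum => j _.
rewrite -sumrB mulr_sumr.
apply: (le_trans (ler_norm_sum _ _ _)); apply: ler_sum => k _.
have [uj [vj dj]] := H j (ltn_ord j).
have [uk [vk dk]] := H k (ltn_ord k).
have -> : alpha j k * u j * u k - alpha j k * v j * v k =
   alpha j k * (u j * (u k - v k) + (u j - v j) * v k) by ring.
rewrite normrM mulrC ler_wpM2r //.
apply: (le_trans (ler_normD _ _)); rewrite !normrM.
have h0 : 0 <= h by apply: le_trans dj.
have e1 : `|u j| * `|u k - v k| <= M * h by apply: ler_pM.
have e2 : `|u j - v j| * `|v k| <= h * M by apply: ler_pM.
lra.
Qed.
End R1.
Arguments Qs {R}. Arguments qf {R}. Arguments Bf {R}. Arguments Cf {R}.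
Arguments Qs_mem {R}. Arguments normal_Qs {R}. Arguments qf_split {R}. Arguments qf_diff {R}.
Section T.
Variable R : realType.
Lemma cvg0_ex (u : nat -> \bar R) (e : R) : 0 < e ->
  u @ \oo --> 0%E -> exists N, forall n, (N <= n)%N -> (u n <= e%:E)%E.
Proof.
move=> e0 /fine_cvgP [finu cu].
have H := (cvgrPdist_lt _ _).1 cu e e0.
have : \forall n \near \oo, (u n <= e%:E)%E.
  near=> n.
  have fn : u n \is a fin_num by near: n; exact: finu.
  have dn : `|0 - fine (u n)| < e by near: n; exact: H.
  rewrite -(fineK fn) lee_fin.
  move: dn; rewrite sub0r normrN ltr_norml => /andP[_ ?]; lra.
case=> N _ HN; exists N => n Nn; exact: HN.
Unshelve. all: end_near.
Qed.
Lemma meas_normge (r : R) : measurable [set x : R | r <= `|x|].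
Proof.
have -> : [set x : R | r <= `|x|] = (fun x : R => `|x|) @^-1` `[r, +oo[%classic.
  by apply/seteqP; split => x /=; rewrite in_itv /= andbT.
rewrite -[X in measurable X]setTI.
by apply: (normr_measurable measurableT); exact: measurable_itv.
Qed.

Lemma normal_tail (e : R) : 0 < e ->
  exists M : R, 0 < M /\ (normal_prob 0 1 [set x : R | (M <= `|x|)%R] <= e%:E)%E.
Proof.
move=> e0.
pose F (n : nat) := [set x : R | n.+1%:R <= `|x|].
have mF n : measurable (F n) by apply: meas_normge.
have capF : \bigcap_n F n = set0.
  apply/seteqP; split => x // Hx.
  have := Hx (Num.Def.trunc `|x|) I; rewrite /F /=.
  have /andP[_ t2] := trunc_itv (normr_ge0 x).
  lra.
have := @nonincreasing_cvg_mu _ _ _ (normal_prob (0:R) 1) F.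
rewrite capF measure0 => /(_ _ mF measurable0) H.
have /cvg0_ex : (normal_prob (0:R) 1 \o F) @ \oo --> 0%E.
  apply: H.
    apply: (le_lt_trans (probability_le1 (normal_prob (0:R) 1) (mF 0%N))); exact: ltry.
  move=> n k nk; rewrite subsetEset => x /=; apply: le_trans.
  by rewrite ler_nat.
move=> /(_ e e0) [N HN]; exists N.+1%:R; split; first by rewrite ltr0n.
exact: (HN N (leqnn N)).
Qed.
End T.

Section Prob.
Context {d : measure_display} {T : measurableType d} {R : realType}
  (P : probability T R).

Lemma PfinE (A : set T) : measurable A -> P A = (fine (P A))%:E.
Proof. by move=> mA; rewrite fineK // fin_num_measure. Qed.

Lemma Pfine_ge0 (A : set T) : 0 <= fine (P A).
Proof. by apply: fine_ge0; apply: measure_ge0. Qed.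

Lemma Pfine_le1 (A : set T) : measurable A -> fine (P A) <= 1.
Proof. by move=> mA; rewrite -lee_fin -PfinE // probability_le1. Qed.

Lemma bigcapP (s : seq nat) (A : nat -> set T) w :
  (\big[setI/setT]_(i <- s) A i) w <-> (forall i, i \in s -> A i w).
Proof.
elim: s => [|x s IH]; first by rewrite big_nil; split.
rewrite big_cons; split.
  move=> [h1 h2] i; rewrite inE => /orP [/eqP -> //|]; by move: i; apply/IH.
move=> H; split; first by apply: H; rewrite inE eqxx.
by apply/IH => i iS; apply: H; rewrite inE iS orbT.
Qed.

Lemma P_bigU_le (I : Type) (s : seq I) (F : I -> set T) :
  (forall i, measurable (F i)) ->
  (P (\big[setU/set0]_(i <- s) F i) <= \sum_(i <- s) P (F i))%E.
Proof.
move=> mF; elim: s => [|x s IH]; first by rewrite !big_nil measure0.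
rewrite !big_cons; apply: le_trans (measureU2 _ _ _) _ => //.
  exact: bigsetU_measurable.
by apply: leeD.
Qed.

Definition cell (M h : R) (i : nat) : set R :=
  `[- M + i%:R * h, - M + i.+1%:R * h[%classic.

Lemma in_co (a b x : R) : `[a, b[%classic x <-> (a <= x) /\ (x < b).
Proof. by rewrite /= in_itv /=; split => [/andP//|/andP]. Qed.

Lemma sum_cells_eq (X : {RV P >-> R}) (M h : R) (j : nat) : 0 <= h ->
  (\sum_(i < j) P (X @^-1` cell M h i) = P (X @^-1` `[(- M)%R, (- M + j%:R * h)%R[%classic))%E.
Proof.
move=> h0; elim: j => [|j IH].
  rewrite big_ord0 mul0r addr0.
  have -> : X @^-1` `[- M, - M[%classic = set0.
    by apply/seteqP; split => x //=; rewrite in_itv /= => /andP[? ?]; lra.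
  by rewrite measure0.
rewrite big_ord_recr /= IH -measureU //; first last.
- apply/seteqP; split => x //= [].
  rewrite /cell /= !in_itv /= => /andP[_ h1] /andP[h2 _]; move: h2; rewrite ?bnd_simp => h2; lra.
- by apply: measurable_funPTI; rewrite /cell; exact: measurable_itv.
- by apply: measurable_funPTI; rewrite /cell; exact: measurable_itv.
congr (P _); rewrite -preimage_setU; congr (_ @^-1` _).
have jS : j.+1%:R = j%:R + 1 :> R by rewrite -natr1.
have jh : 0 <= j%:R * h by rewrite mulr_ge0 // ler0n.
apply/seteqP; split => x.
  rewrite /cell in_co => -[/in_co[h1 h2]|/in_co[h1 h2]]; split; rewrite ?jS in h2 *;
    lra.
rewrite /cell in_co => -[h1 h2].
have [xl|xl] := ltP x (- M + j%:R * h); [left|right]; apply/in_co; split;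
  rewrite ?jS in h2 *; lra.
Qed.

Lemma sum_cells_le1 (X : {RV P >-> R}) (M h : R) (j : nat) : 0 <= h ->
  \sum_(i < j) fine (P (X @^-1` cell M h i)) <= 1.
Proof.
move=> h0; rewrite -lee_fin -sumEFin.
rewrite (eq_bigr (fun i : 'I_j => P (X @^-1` cell M h i))); last first.
  by move=> i _; rewrite -PfinE //; apply: measurable_funPTI; exact: measurable_itv.
by rewrite sum_cells_eq // probability_le1 //; apply: measurable_funPTI; exact: measurable_itv.
Qed.

Lemma cell_trunc (M h g : R) (N : nat) : 0 < h -> `|g| < M ->
  N.+1%:R * h = 2 * M ->
  (Num.Def.trunc ((g + M) / h) < N.+1)%N /\
  - M + (Num.Def.trunc ((g + M) / h))%:R * h <= g /\
  g < - M + (Num.Def.trunc ((g + M) / h)).+1%:R * h.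
Proof.
move=> h0 gM hN; move: gM; rewrite ltr_norml => /andP[g1 g2].
have x0 : 0 <= (g + M) / h by rewrite divr_ge0 // ?ltW //; lra.
have /andP[t1 t2] := trunc_itv x0.
set i := Num.Def.trunc _ in t1 t2 *.
have hx : (g + M) / h * h = g + M by rewrite divfK // gt_eqF.
split.
  rewrite -(ltr_nat R); apply: le_lt_trans t1 _.
  rewrite ltr_pdivrMr // hN; lra.
have a1 : i%:R * h <= g + M by rewrite -hx ler_wpM2r // ltW.
have a2 : g + M < i.+1%:R * h by rewrite -hx ltr_pM2r.
split; lra.
Qed.

Variable (G : nat -> {RV P >-> R}).
Hypothesis indep : mutually_independent_seq P (fun j => G j).
Hypothesis normG : forall j, standard_normal P (G j).
Variables (alpha : nat -> nat -> R) (m N : nat) (M h z eps : R).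

Definition yv (dd : {ffun 'I_m.+1 -> 'I_N.+1}) (j : nat) : R :=
  if j is k.+1 then - M + (dd (inord k) : nat)%:R * h else 0.
Definition QS dd :=
  Qs (alpha 0%N 0%N) (Bf alpha m.+1 (yv dd)) (Cf alpha m.+1 (yv dd) - z) (2 * eps).
Definition Bd dd (i : nat) : set R :=
  if i is k.+1 then cell M h (dd (inord k)) else QS dd.
Definition Rect dd : set T :=
  \big[setI/setT]_(i <- iota 0 m.+2) (G i @^-1` Bd dd i).

Lemma Bd_meas dd i : measurable (Bd dd i).
Proof.
case: i => [|k] /=; last exact: measurable_itv.
by rewrite /QS /Qs /=; apply: measurableU; exact: measurable_itv.
Qed.

Lemma Rect_meas dd : measurable (Rect dd).
Proof.
apply: bigsetI_measurable => i _; apply: measurable_funPTI; exact: Bd_meas.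
Qed.

Lemma Rect_prob dd : fine (P (Rect dd)) =
  fine (P (G 0%N @^-1` QS dd)) *
  \prod_(k < m.+1) fine (P (G k.+1 @^-1` cell M h (dd k))).
Proof.
rewrite /Rect indep ?iota_uniq //; last exact: Bd_meas.
have -> : iota 0 m.+2 = 0%N :: index_iota 1 m.+2 by rewrite /index_iota subn1.
rewrite big_cons big_add1 /= big_mkord.
rewrite (eq_bigr (fun k : 'I_m.+1 => (fine (P (G k.+1 @^-1` cell M h (dd k))))%:E)); last first.
  move=> k _; rewrite inord_val -PfinE //.
  by apply: measurable_funPTI; exact: measurable_itv.
rewrite prodEFin (@PfinE (G 0%N @^-1` QS dd)); last first.
  apply: measurable_funPTI; exact: (Bd_meas dd 0).
by rewrite -EFinM.
Qed.

Definition beta0 := 2 * normal_peak (1:R) * Num.sqrt (2 * (2 * eps) / `|alpha 0%N 0%N|).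

Lemma sum_rect_le : alpha 0%N 0%N != 0 -> 0 < eps -> 0 <= h ->
  \sum_(dd : {ffun 'I_m.+1 -> 'I_N.+1}) fine (P (Rect dd)) <= beta0.
Proof.
move=> a0 e0 h0.
have b0 : 0 <= beta0.
  by rewrite /beta0 mulr_ge0 ?sqrtr_ge0 // mulr_ge0 // normal_peak_ge0.
under eq_bigr do rewrite Rect_prob.
apply: (@le_trans _ _ (\sum_(dd : {ffun 'I_m.+1 -> 'I_N.+1}) beta0 *
   \prod_(k < m.+1) fine (P (G k.+1 @^-1` cell M h (dd k))))).
  apply: ler_sum => dd _; apply: ler_wpM2r.
    by apply: prodr_ge0 => k _; apply: Pfine_ge0.
  have mQ : measurable (G 0%N @^-1` QS dd).
    by apply: measurable_funPTI; exact: (Bd_meas dd 0).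
  rewrite -lee_fin -PfinE // normG; last exact: (Bd_meas dd 0).
  rewrite /QS /beta0; apply: normal_Qs => //; lra.
rewrite -mulr_sumr -[leRHS]mulr1 ler_wpM2l //.
rewrite -(bigA_distr_bigA (fun (k : 'I_m.+1) (i : 'I_N.+1) => fine (P (G k.+1 @^-1` cell M h i)))).
apply: (@le_trans _ _ (\prod_(k < m.+1) (1:R))); last by rewrite big1.
apply: ler_prod => k _; apply/andP; split.
  by apply: sumr_ge0 => i _; apply: Pfine_ge0.
by apply: sum_cells_le1.
Qed.

Lemma cover (w : T) : alpha 0%N 0%N != 0 -> 0 < h -> N.+1%:R * h = 2 * M ->
  2 * M * h * (\sum_(j < m.+2) \sum_(k < m.+2) `|alpha j k|) <= eps ->
  (forall j, (j < m.+2)%N -> `|G j w| < M) ->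
  `|qf alpha m.+2 (fun j => G j w) - z| < eps ->
  exists dd, Rect dd w.
Proof.
move=> a0 h0 hN hA Hb Hq.
pose ix (k : nat) : nat := Num.Def.trunc ((G k.+1 w + M) / h).
have ixP k : (k < m.+1)%N -> (ix k < N.+1)%N /\
    - M + (ix k)%:R * h <= G k.+1 w /\ G k.+1 w < - M + (ix k).+1%:R * h.
  by move=> km; apply: cell_trunc => //; apply: Hb.
pose dd := [ffun k : 'I_m.+1 => (inord (ix k) : 'I_N.+1)].
have ddE k : (k < m.+1)%N -> (dd (inord k) : nat) = ix k.
  move=> km; rewrite ffunE (inordK km).
  by case: (ixP _ km) => ? _; rewrite inordK.
have M0 : 0 <= M by exact: (le_trans (normr_ge0 _) (ltW (Hb 0%N isT))).
exists dd; apply/bigcapP => i; rewrite mem_iota add0n => /andP[_ im].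
case: i im => [|k] im /=.
  pose t := G 0%N w.
  pose vt (j : nat) : R := if j is k.+1 then yv dd j else t.
  have hq := qf_split alpha m.+1 vt.
  have hd : `|qf alpha m.+2 (fun j => G j w) - qf alpha m.+2 vt| <= eps.
    apply: le_trans hA; apply: qf_diff => // j jm.
    case: j jm => [|k] km /=.
      by rewrite subrr normr0; split; [|split]; apply: ltW => //; apply: Hb.
    have [ik [c1 c2]] := ixP k km.
    rewrite ddE //; split; [by apply: ltW; apply: Hb|split].
      rewrite ler_norml; apply/andP; split.
        have : 0 <= (ix k)%:R * h by rewrite mulr_ge0 // ?ler0n // ltW.
        lra.
      have := Hb k.+1 km; rewrite ltr_norml => /andP[_ ?]; lra.
    rewrite ler_norml; apply/andP; split.
      have : (ix k).+1%:R = (ix k)%:R + 1 :> R by rewrite -natr1.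
      move=> e; rewrite e in c2; lra.
    lra.
  rewrite /QS; apply: Qs_mem => //.
  have -> : alpha 0%N 0%N * t ^+ 2 + Bf alpha m.+1 (yv dd) * t +
     (Cf alpha m.+1 (yv dd) - z) = qf alpha m.+2 vt - z.
    by rewrite hq /=; rewrite addrA.
  have := ler_distD (qf alpha m.+2 (fun j => G j w)) (qf alpha m.+2 vt) z.
  rewrite distrC in hd; lra.
have km : (k < m.+1)%N by [].
have [ik [c1 c2]] := ixP k km.
rewrite /cell in_co ddE //; split => //.
Qed.

End Prob.

Lemma bigU_mem {T : Type} (I : eqType) (s : seq I) (F : I -> set T) i w :
  i \in s -> F i w -> (\big[setU/set0]_(j <- s) F j) w.
Proof.
elim: s => // x s IH; rewrite inE big_cons => /orP[/eqP <-|iS] Fi; first by left.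
by right; apply: IH.
Qed.

Lemma ereal_eq0 {R : realType} (x : \bar R) : (0 <= x)%E -> (x <= 1%E)%E ->
  (forall e : R, 0 < e -> (x <= e%:E)%E) -> x = 0%E.
Proof.
move=> x0 x1 H.
have fx : x \is a fin_num by rewrite ge0_fin_numE // (le_lt_trans x1) // ltry.
rewrite -(fineK fx); congr (_%:E).
have f0 : 0 <= fine x by apply: fine_ge0.
apply/eqP; rewrite eq_le f0 andbT; apply/negPn/negP; rewrite -ltNge => fp.
have := H (fine x / 2); rewrite -(fineK fx) lee_fin => /(_ _).
have h2 : 0 < fine x / 2 by rewrite divr_gt0.
move=> /(_ h2); lra.
Qed.

Theorem mainTheorem13 (d : measure_display) (T : measurableType d)
  (R : realType) (P : probability T R)
  (G : nat -> {RV P >-> R}) (alpha : nat -> nat -> R) (Z : {RV P >-> R}) :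
  mutually_independent_seq P (fun j => G j) ->
  (forall j, standard_normal P (G j)) ->
  cvg_in_probability P (quad_partial alpha (fun j => G j)) Z ->
  alpha 0%N 0%N != 0 ->
  forall z : R, P (Z @^-1` [set z]) = 0%E.
Proof.
move=> indep normG conv a0 z.
have mZz : measurable (Z @^-1` [set z]) by apply: measurable_funPTI.
apply: ereal_eq0; [exact: measure_ge0|exact: probability_le1|].
move=> e3 e30.
pose eta := e3 / 3.
have eta0 : 0 < eta by rewrite divr_gt0.
pose a := alpha 0%N 0%N.
have pk0 : 0 <= normal_peak (1:R) by apply: normal_peak_ge0.
pose c := eta / (2 * normal_peak (1:R) + 1).
have c0 : 0 < c by rewrite divr_gt0 //; lra.
have na0 : 0 < `|a| by rewrite normr_gt0.
pose eps := `|a| * c ^+ 2 / 4.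
have eps0 : 0 < eps by rewrite /eps divr_gt0 // mulr_gt0 // exprn_gt0.
have beta_le : beta0 alpha eps <= eta.
  rewrite /beta0.
  have -> : 2 * (2 * eps) / `|alpha 0%N 0%N| = c ^+ 2.
    rewrite /eps -/a; field; exact: lt0r_neq0.
  rewrite sqrtr_sqr ger0_norm ?(ltW c0) //.
  have : c * (2 * normal_peak (1:R) + 1) = eta.
    by rewrite /c divfK // gt_eqF //; lra.
  lra.
have [N0 HN0] := cvg0_ex _ _ _ eta0 (conv eps eps0).
pose n := N0.+1; pose mm := (2 * N0)%N.
have hmm : (2 * n)%N = mm.+2 by rewrite /n /mm mulnS add2n.
have k0 : 0 < (mm.+2)%:R :> R by rewrite ltr0n.
have [M [M0 HM]] := normal_tail _ (eta / (mm.+2)%:R) (divr_gt0 eta0 k0).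
pose A := \sum_(j < mm.+2) \sum_(k < mm.+2) `|alpha j k|.
have A0 : 0 <= A by apply: sumr_ge0 => j _; apply: sumr_ge0 => k _.
pose N := Num.Def.trunc (4 * M ^+ 2 * A / eps).
have N0' : 0 < N.+1%:R :> R by rewrite ltr0n.
pose h := 2 * M / N.+1%:R.
have h0 : 0 < h by rewrite /h divr_gt0 // mulr_gt0.
have hN : N.+1%:R * h = 2 * M by rewrite /h mulrC divfK // gt_eqF.
have hA : 2 * M * h * A <= eps.
  have x0 : 0 <= 4 * M ^+ 2 * A / eps.
    by rewrite divr_ge0 ?(ltW eps0) // mulr_ge0 // mulr_ge0 // exprn_ge0 // ltW.
  have /andP[_ t2] := trunc_itv x0.
  rewrite -/N ltr_pdivrMr // in t2.
  have -> : 2 * M * h * A = 4 * M ^+ 2 * A / N.+1%:R.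
    by rewrite /h; field; rewrite gt_eqF.
  rewrite ler_pdivrMr //; lra.
pose U1 := \big[setU/set0]_(dd : {ffun 'I_mm.+1 -> 'I_N.+1})
   Rect P G alpha mm N M h z eps dd.
pose tl := [set x : R | (M <= `|x|)%R].
pose U2 := \big[setU/set0]_(j <- iota 0 mm.+2) (G j @^-1` tl).
pose U3 := [set w | eps <= `|quad_partial alpha (fun j => G j) n w - Z w|].
have mU1 : measurable U1.
  by apply: bigsetU_measurable => dd _; exact: Rect_meas.
have mU2 : measurable U2.
  by apply: bigsetU_measurable => j _; apply: measurable_funPTI; exact: meas_normge.
have mU3 : measurable U3.
  have mf : measurable_fun setT (fun w => `|quad_partial alpha (fun j => G j) n w - Z w|).
    apply: measurableT_comp => //; apply: measurable_funB => //.
    rewrite /quad_partial; apply: measurable_sum => j; apply: measurable_sum => k.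
    by apply: measurable_funM => //; apply: measurable_funM.
  have -> : U3 = setT `&` (fun w => `|quad_partial alpha (fun j => G j) n w - Z w|) @^-1`
      `[eps, +oo[%classic.
    by rewrite setTI /U3; apply/seteqP; split => w /=; rewrite in_itv /= andbT.
  by apply: mf => //; exact: measurable_itv.
have incl : Z @^-1` [set z] `<=` U1 `|` U2 `|` U3.
  move=> w /= Zw.
  have [h3|h3] := lerP eps `|quad_partial alpha (fun j => G j) n w - Z w|; first by right.
  left.
  have [[j [jm Mj]]|nj] := pselect (exists j, (j < mm.+2)%N /\ M <= `|G j w|).
    by right; apply: (@bigU_mem _ _ _ _ j); first by rewrite mem_iota add0n.
  left.
  have Hb : forall j, (j < mm.+2)%N -> `|G j w| < M.
    by move=> j jm; rewrite ltNge; apply/negP => Mj; apply: nj; exists j.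
  have Hq : `|qf alpha (2 * n) (fun j => G j w) - z| < eps by rewrite -Zw; exact: h3.
  rewrite hmm in Hq.
  have [dd Hdd] := cover P G alpha mm N M h z eps w a0 h0 hN hA Hb Hq.
  by apply: (@bigU_mem _ _ _ _ dd) => //; exact: mem_index_enum.
have -> : e3 = eta + eta + eta by rewrite /eta; field.
apply: (le_trans (le_measure _ _ _ incl)); rewrite ?inE //.
  by apply: measurableU => //; apply: measurableU.
apply: (le_trans (measureU2 _ _ _)) => //; first exact: measurableU.
rewrite !EFinD; apply: leeD; first apply: (le_trans (measureU2 _ _ _)) => //.
- apply: leeD.
  + apply: (le_trans (P_bigU_le _ _ _ _ _)); first by move=> dd; exact: Rect_meas.
    rewrite (eq_bigr (fun dd => (fine (P (Rect P G alpha mm N M h z eps dd)))%:E)); last first.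
      by move=> dd _; rewrite -PfinE //; exact: Rect_meas.
    rewrite sumEFin lee_fin; apply: le_trans beta_le.
    by apply: sum_rect_le => //; exact: ltW.
  + apply: (le_trans (P_bigU_le _ _ _ _ _)).
      by move=> j; apply: measurable_funPTI; exact: meas_normge.
    rewrite (eq_bigr (fun j => normal_prob 0 1 tl)); last first.
      by move=> j _; rewrite normG //; exact: meas_normge.
    apply: (@le_trans _ _ (\sum_(j <- iota 0 mm.+2) (eta / (mm.+2)%:R)%:E)%E).
      by apply: lee_sum => j _.
    rewrite sumEFin lee_fin.
    have -> : iota 0 mm.+2 = index_iota 0 mm.+2 by rewrite /index_iota subn0.
    rewrite sumr_const_nat subn0.
    have -> : eta / (mm.+2)%:R *+ mm.+2 = eta / (mm.+2)%:R * (mm.+2)%:R by rewrite mulr_natr.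
    by rewrite divfK // gt_eqF.
- exact: (HN0 n (leqnSn N0)).
Qed.
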